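(* Let $\langle A, \leq, \otimes, \mathbf{1}\rangle$ be a finitely distributive semi-lattice monoid (respectively, a distributive complete lattice monoid), with bottom element $\bot$. Let $Lex_\omega(A) = I(A)^\omega \cup I(A)^\ast A \{\bot\}^\omega$, with componentwise operation $\otimes^\omega$, identity $\mathbf{1}^\omega$, and order $a \leq_\omega b$ iff $a_{\leq k} \leq_k b_{\leq k}$ for all $k\geq1$. Then $\langle Lex_\omega(A), \leq_\omega, \otimes^\omega, \mathbf{1}^\omega\rangle$ is a finitely distributive semi-lattice monoid (respectively, a distributive complete lattice monoid).
   Context: A semi-lattice monoid (SLM) is $\langle A,\leq,\otimes,\mathbf{1}\rangle$ where $\langle A,\otimes,\mathbf{1}\rangle$ is a commutative monoid and $\langle A,\leq\rangle$ a partial order in which every finite subset (including $\emptyset$, whose LUB is the bottom $\bot$) has a least upper bound $\bigvee X$; a complete lattice monoid (CLM) is the same with LUBs for all subsets. Finitely distributive: $a\otimes\bigvee X=\bigvee\{a\otimes x\mid x\in X\}$ for all $a$ and finite $X$; distributive (CLM): for all $X$. $a<b$ means $a\leq b$, $a\neq b$. $I(A) = \{c \in A \mid \forall a,b \in A.\ a \otimes c = b \otimes c \Rightarrow a = b\}$, $C(A)=A\setminus I(A)$. $I(A)^\omega$: infinite sequences over $I(A)$; $I(A)^\ast A\{\bot\}^\omega$: infinite sequences consisting of a finite (possibly empty) sequence over $I(A)$, then one element of $A$, then infinitely many $\bot$. $a_{\leq k}$ is the length-$k$ prefix. The order $\leq_k$ on $A^k$: $\leq_1=\leq$, and for $k\geq2$,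 $a_1 \ldots a_k \leq_k b_1 \ldots b_k$ iff $a_1 < b_1$, or $a_1 = b_1$ and $a_2 \ldots a_k \leq_{k-1} b_2 \ldots b_k$. *)

(* Defs.v *)
From Stdlib Require Import List.
Import ListNotations.
Set Implicit Arguments.

Definition is_ub {T : Type} (le : T -> T -> Prop) (X : T -> Prop) (x : T) : Prop :=
  forall y, X y -> le y x.
Definition is_lub {T : Type} (le : T -> T -> Prop) (X : T -> Prop) (x : T) : Prop :=
  is_ub le X x /\ forall z, is_ub le X z -> le x z.

Definition partial_order {T : Type} (le : T -> T -> Prop) : Prop :=
  (forall a, le a a) /\
  (forall a b, le a b -> le b a -> a = b) /\
  (forall a b c, le a b -> le b c -> le a c).

Definition comm_monoid {T : Type} (mul : T -> T -> T) (one : T) : Prop :=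
  (forall a b c, mul a (mul b c) = mul (mul a b) c) /\
  (forall a b, mul a b = mul b a) /\
  (forall a, mul one a = a).

(** finite subsets are represented by lists (the empty list gives the bottom) *)
Definition SLM {T : Type} (le : T -> T -> Prop) (mul : T -> T -> T) (one : T) : Prop :=
  partial_order le /\ comm_monoid mul one /\
  forall l : list T, exists x, is_lub le (fun y => In y l) x.

Definition CLM {T : Type} (le : T -> T -> Prop) (mul : T -> T -> T) (one : T) : Prop :=
  partial_order le /\ comm_monoid mul one /\
  forall X : T -> Prop, exists x, is_lub le X x.

Definition fin_distributive {T : Type} (le : T -> T -> Prop) (mul : T -> T -> T) : Prop :=
  forall (a : T) (l : list T) (s : T), is_lub le (fun y => In y l) s ->
    is_lub le (fun y => exists x, In x l /\ y = mul a x) (mul a s).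

Definition distributive {T : Type} (le : T -> T -> Prop) (mul : T -> T -> T) : Prop :=
  forall (a : T) (X : T -> Prop) (s : T), is_lub le X s ->
    is_lub le (fun y => exists x, X x /\ y = mul a x) (mul a s).

(** I(A): cancellable elements *)
Definition cancellable {A : Type} (mul : A -> A -> A) (c : A) : Prop :=
  forall a b, mul a c = mul b c -> a = b.

Definition strict {A : Type} (le : A -> A -> Prop) (a b : A) : Prop := le a b /\ a <> b.

Definition in_Lex {A : Type} (mul : A -> A -> A) (bot : A) (s : nat -> A) : Prop :=
  (forall n, cancellable mul (s n)) \/
  (exists k, (forall n, n < k -> cancellable mul (s n)) /\
             (forall n, k < n -> s n = bot)).

Definition LexT {A : Type} (mul : A -> A -> A) (bot : A) : Type :=
  { s : nat -> A | in_Lex mul bot s }.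

Definition shift {A : Type} (s : nat -> A) : nat -> A := fun n => s (S n).

(** lexk le k a b  <->  a_{<= k+1}  <=_{k+1}  b_{<= k+1} *)
Fixpoint lexk {A : Type} (le : A -> A -> Prop) (k : nat) (a b : nat -> A) : Prop :=
  match k with
  | O => le (a 0) (b 0)
  | S k' => strict le (a 0) (b 0) \/ (a 0 = b 0 /\ lexk le k' (shift a) (shift b))
  end.

Definition lex_omega_le {A : Type} (le : A -> A -> Prop) (a b : nat -> A) : Prop :=
  forall k, lexk le k a b.

Definition lex_le {A : Type} (le : A -> A -> Prop) (mul : A -> A -> A) (bot : A)
  (x y : LexT mul bot) : Prop := lex_omega_le le (proj1_sig x) (proj1_sig y).

Definition lex_mul_closed {A : Type} (mul : A -> A -> A) (bot : A) : Prop :=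
  forall a b, in_Lex mul bot a -> in_Lex mul bot b -> in_Lex mul bot (fun n => mul (a n) (b n)).

Definition lex_mul {A : Type} (mul : A -> A -> A) (bot : A)
  (Hc : lex_mul_closed mul bot) (x y : LexT mul bot) : LexT mul bot :=
  exist _ (fun n => mul (proj1_sig x n) (proj1_sig y n))
        (Hc _ _ (proj2_sig x) (proj2_sig y)).

Lemma one_omega_in_Lex {A : Type} (mul : A -> A -> A) (one bot : A) :
  comm_monoid mul one -> in_Lex mul bot (fun _ => one).
Proof.
  intros [_ [Hc Hu]]. left. intros n a b H.
  rewrite (Hc a one), (Hc b one), !Hu in H. exact H.
Qed.

Definition lex_one {A : Type} (mul : A -> A -> A) (one bot : A)
  (Hm : comm_monoid mul one) : LexT mul bot :=
  exist _ (fun _ => one) (one_omega_in_Lex bot Hm).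

(* Main.v *)
Require Import Defs.
From Stdlib Require Import List Arith Lia Classical ClassicalEpsilon FunctionalExtensionality ProofIrrelevance.
Import ListNotations.

Definition agree {A : Type} (j : nat) (a b : nat -> A) := forall i, i < j -> a i = b i.
Definition DD {A : Type} (le : A -> A -> Prop) (a b : nat -> A) :=
  (forall n, a n = b n) \/ exists j, agree j a b /\ strict le (a j) (b j).

Lemma min_ex (P : nat -> Prop) : (exists n, P n) -> exists n, P n /\ forall m, m < n -> ~ P m.
Proof.
  intros [n Hn]. revert Hn. induction n as [n IH] using lt_wf_ind. intros Pn.
  destruct (classic (exists m, m < n /\ P m)) as [[m [Hm Pm]]|H].
  - exact (IH m Hm Pm).
  - exists n; split; auto. intros m Hm Pm. apply H; eauto.
Qed.

Lemma first_diff {A : Type} (a b : nat -> A) : ~ (forall n, a n = b n) -> exists j, agree j a b /\ a j <> b j.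
Proof.
  intros H. apply not_all_ex_not in H. destruct (min_ex _ H) as [j [Hj Hm]].
  exists j; split; auto. intros i Hi. apply NNPP. apply Hm; auto.
Qed.

Lemma is_lub_ext {A : Type} (le : A -> A -> Prop) (S1 S2 : A -> Prop) v :
  (forall y, S1 y <-> S2 y) -> is_lub le S1 v -> is_lub le S2 v.
Proof.
  intros H [H1 H2]; split.
  - intros y Hy; apply H1, H, Hy.
  - intros z Hz; apply H2; intros y Hy; apply Hz, H, Hy.
Qed.

Lemma lexk_agree {A : Type} (le : A -> A -> Prop) : forall k a b, agree k a b -> lexk le k a b -> le (a k) (b k).
Proof.
  induction k; intros a b Ha H; simpl in H.
  - exact H.
  - destruct H as [[_ Hne]|[_ H]].
    + exfalso; apply Hne; apply Ha; lia.
    + apply (IHk (shift a) (shift b)); auto. intros i Hi; unfold shift; apply Ha; lia.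
Qed.


Lemma lexk_eq {A : Type} (le : A -> A -> Prop) (Hpo : partial_order le) :
  forall k a b, (forall n, a n = b n) -> lexk le k a b.
Proof.
  induction k; intros a b H; simpl.
  - rewrite H; apply Hpo.
  - right; split; auto. apply IHk; intros n; unfold shift; auto.
Qed.

Lemma lexk_strict {A : Type} (le : A -> A -> Prop) (Hpo : partial_order le) :
  forall k a b j, agree j a b -> strict le (a j) (b j) -> lexk le k a b.
Proof.
  induction k; intros a b j Ha Hs; simpl.
  - destruct j. apply Hs. rewrite (Ha 0) by lia; apply Hpo.
  - destruct j.
    + left; exact Hs.
    + right; split. apply Ha; lia. apply (IHk _ _ j).
      * intros i Hi; unfold shift; apply Ha; lia.
      * exact Hs.
Qed.

Lemma LD {A : Type} (le : A -> A -> Prop) (Hpo : partial_order le) a b :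
  lex_omega_le le a b <-> DD le a b.
Proof.
  split.
  - intros H. destruct (classic (forall n, a n = b n)) as [E|E]. left; auto.
    right. destruct (first_diff _ _ E) as [j [Hj Hne]]. exists j; split; auto.
    split; auto. apply lexk_agree; auto.
  - intros [E|[j [Hj Hs]]] k.
    + apply lexk_eq; auto.
    + eapply lexk_strict; eauto.
Qed.

Lemma D_antisym {A : Type} (le : A -> A -> Prop) (Hpo : partial_order le) a b :
  DD le a b -> DD le b a -> forall n, a n = b n.
Proof.
  intros [E|[j [Hj [Hl Hn]]]] [E'|[j' [Hj' [Hl' Hn']]]].
  - exact E.
  - exact E.
  - intros n; symmetry; apply E'.
  - exfalso. destruct (lt_eq_lt_dec j j') as [[H|H]|H].
    + apply Hn. symmetry. apply Hj'; auto.
    + subst. apply Hn. apply Hpo; auto.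
    + apply Hn'. symmetry; apply Hj; auto.
Qed.

Lemma D_trans {A : Type} (le : A -> A -> Prop) (Hpo : partial_order le) a b c :
  DD le a b -> DD le b c -> DD le a c.
Proof.
  destruct Hpo as [Hr [Has Ht]].
  intros [E|[j [Hj [Hl Hn]]]] [E'|[j' [Hj' [Hl' Hn']]]].
  - left; intros n; rewrite E; auto.
  - right; exists j'; split. intros i Hi; rewrite E; auto. rewrite E; split; auto.
  - right; exists j; split. intros i Hi; rewrite <- E'; auto. rewrite <- E'; split; auto.
  - right. destruct (lt_eq_lt_dec j j') as [[H|H]|H].
    + exists j; split.
      * intros i Hi; rewrite (Hj i Hi); apply Hj'; lia.
      * rewrite <- (Hj' j H). split; auto.
    + subst j'. exists j; split.
      * intros i Hi; rewrite (Hj i Hi); auto.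
      * split. apply Ht with (b j); auto.
        intros E. apply Hn. apply Has; auto. rewrite E; auto.
    + exists j'; split.
      * intros i Hi; rewrite (Hj i) by lia; auto.
      * rewrite (Hj j' H); split; auto.
Qed.

Lemma NC {A : Type} (mul : A -> A -> A) (bot : A) s : in_Lex mul bot s ->
  forall j, ~ cancellable mul (s j) -> forall i, j < i -> s i = bot.
Proof.
  intros [H|[k [H1 H2]]] j Hj i Hi.
  - exfalso; auto.
  - apply H2. destruct (lt_dec j k). exfalso; apply Hj; auto. lia.
Qed.

Lemma canc_mul {A : Type} (mul : A -> A -> A) one (Hcm : comm_monoid mul one) c d :
  cancellable mul c -> cancellable mul d -> cancellable mul (mul c d).
Proof.
  destruct Hcm as [Ha [Hc Hu]]. intros H1 H2 x y E. apply H1, H2. rewrite <- !Ha. exact E.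
Qed.

Lemma mul_closed {A : Type} (mul : A -> A -> A) one bot (Hcm : comm_monoid mul one)
  (Habs : forall z, mul z bot = bot) : lex_mul_closed mul bot.
Proof.
  pose proof Hcm as [Ha [Hc Hu]].
  intros a b Hla Hlb.
  destruct Hla as [Ha1|[k [Ha1 Ha2]]]; destruct Hlb as [Hb1|[k' [Hb1 Hb2]]].
  - left; intros n; apply (canc_mul _ _ Hcm); auto.
  - right; exists k'; split.
    + intros; apply (canc_mul _ _ Hcm); auto.
    + intros n Hn; cbv beta; rewrite Hb2; auto.
  - right; exists k; split.
    + intros; apply (canc_mul _ _ Hcm); auto.
    + intros n Hn; cbv beta; rewrite Ha2 by auto; rewrite Hc; apply Habs.
  - right; exists (min k k'); split.
    + intros n Hn; apply (canc_mul _ _ Hcm); [apply Ha1|apply Hb1]; lia.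
    + intros n Hn; cbv beta. destruct (le_lt_dec k k').
      * rewrite Ha2 by lia; rewrite Hc; apply Habs.
      * rewrite Hb2 by lia; apply Habs.
Qed.

Lemma D_mul {A : Type} (le : A -> A -> Prop) (mul : A -> A -> A) one bot
  (Hpo : partial_order le) (Hcm : comm_monoid mul one)
  (Habs : forall z, mul z bot = bot)
  (Hmono : forall c x y, le x y -> le (mul c x) (mul c y)) a x y :
  in_Lex mul bot a -> DD le x y -> DD le (fun n => mul (a n) (x n)) (fun n => mul (a n) (y n)).
Proof.
  pose proof Hcm as [Has [Hc Hu]].
  intros Ha [E|[j [Hj [Hl Hn]]]].
  - left; intros n; cbv beta; rewrite E; auto.
  - destruct (classic (mul (a j) (x j) = mul (a j) (y j))) as [E|E].
    + left. assert (Hnc : ~ cancellable mul (a j)).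
      { intros Hc'. apply Hn. apply Hc'. rewrite !(Hc _ (a j)). exact E. }
      intros n; cbv beta. destruct (lt_eq_lt_dec n j) as [[H|H]|H].
      * rewrite (Hj n H); auto.
      * subst; auto.
      * rewrite (NC mul bot a Ha j Hnc n H). rewrite !(Hc bot). rewrite !Habs. reflexivity.
    + right; exists j; split.
      * intros i Hi; cbv beta; rewrite (Hj i Hi); auto.
      * split; auto.
Qed.

Lemma lub_ex' {A : Type} (le : A -> A -> Prop) (bot : A) (X : (nat -> A) -> Prop)
  (Hlub : forall (P : (nat -> A) -> Prop) n, (forall x, P x -> X x) ->
     exists v, is_lub le (fun y => exists x, P x /\ y = x n) v) P n :
  exists v, (forall x, P x -> X x) -> is_lub le (fun y => exists x, P x /\ y = x n) v.
Proof.
  destruct (classic (forall x, P x -> X x)) as [H|H].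
  - destruct (Hlub P n H) as [v Hv]; exists v; auto.
  - exists bot; intros; contradiction.
Qed.

Definition lubf {A : Type} (le : A -> A -> Prop) (bot : A) (X : (nat -> A) -> Prop) Hlub
  (P : (nat -> A) -> Prop) (n : nat) : A :=
  proj1_sig (constructive_indefinite_description _ (@lub_ex' A le bot X Hlub P n)).

Lemma lubf_spec {A : Type} (le : A -> A -> Prop) (bot : A) (X : (nat -> A) -> Prop) Hlub P n :
  (forall x, P x -> X x) -> is_lub le (fun y => exists x, P x /\ y = x n) (lubf le bot X Hlub P n).
Proof.
  unfold lubf. exact (proj2_sig (constructive_indefinite_description _ (@lub_ex' A le bot X Hlub P n))).
Qed.

Fixpoint pref {A : Type} (le : A -> A -> Prop) (bot : A) (X : (nat -> A) -> Prop) Hlub (n : nat) : nat -> A :=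
  match n with
  | O => fun _ => bot
  | S m => fun i => if Nat.eqb i m
                    then lubf le bot X Hlub (fun x => X x /\ agree m x (pref le bot X Hlub m)) m
                    else pref le bot X Hlub m i
  end.

Definition sL {A : Type} (le : A -> A -> Prop) (bot : A) (X : (nat -> A) -> Prop) Hlub (n : nat) : A :=
  pref le bot X Hlub (S n) n.

Lemma pref_sL {A : Type} (le : A -> A -> Prop) (bot : A) (X : (nat -> A) -> Prop) Hlub :
  forall m i, i < m -> pref le bot X Hlub m i = sL le bot X Hlub i.
Proof.
  induction m; intros i Hi. lia. simpl. destruct (Nat.eqb_spec i m).
  - subst. unfold sL; simpl; rewrite Nat.eqb_refl; reflexivity.
  - rewrite IHm by lia. reflexivity.
Qed.

Lemma sL_spec {A : Type} (le : A -> A -> Prop) (bot : A) (X : (nat -> A) -> Prop) Hlub n :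
  is_lub le (fun y => exists x, (X x /\ agree n x (sL le bot X Hlub)) /\ y = x n) (sL le bot X Hlub n).
Proof.
  pose proof (lubf_spec le bot X Hlub (fun x => X x /\ agree n x (pref le bot X Hlub n)) n (fun x H => proj1 H)) as H.
  assert (E : sL le bot X Hlub n = lubf le bot X Hlub (fun x => X x /\ agree n x (pref le bot X Hlub n)) n).
  { unfold sL; simpl; rewrite Nat.eqb_refl; reflexivity. }
  rewrite E. eapply is_lub_ext; [|exact H].
  intros y; split; intros [x [[Hx Ha] Ey]]; exists x; repeat split; auto; intros i Hi.
  - rewrite (Ha i Hi). apply pref_sL; auto.
  - rewrite (Ha i Hi). symmetry; apply pref_sL; auto.
Qed.

Lemma sL_bot {A : Type} (le : A -> A -> Prop) (mul : A -> A -> A) (bot : A) (X : (nat -> A) -> Prop) Hlub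
  (Hpo : partial_order le) (Hbot : forall a, le bot a) (HX : forall x, X x -> in_Lex mul bot x) n :
  ~ cancellable mul (sL le bot X Hlub n) -> forall m, n < m -> sL le bot X Hlub m = bot.
Proof.
  intros Hn m Hm. destruct (sL_spec le bot X Hlub m) as [Hu Hl]. apply Hpo.
  - apply Hl. intros y [x [[Hx Ha] E]]. subst y.
    assert (E1 : x n = sL le bot X Hlub n) by (apply Ha; lia).
    assert (E2 : x m = bot).
    { apply (NC mul bot x (HX x Hx) n); [rewrite E1; auto | lia]. }
    rewrite E2; apply Hpo.
  - apply Hbot.
Qed.

Lemma sL_in {A : Type} (le : A -> A -> Prop) (mul : A -> A -> A) (bot : A) (X : (nat -> A) -> Prop) Hlub
  (Hpo : partial_order le) (Hbot : forall a, le bot a) (HX : forall x, X x -> in_Lex mul bot x) :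
  in_Lex mul bot (sL le bot X Hlub).
Proof.
  destruct (classic (forall n, cancellable mul (sL le bot X Hlub n))) as [H|H].
  - left; auto.
  - right. apply not_all_ex_not in H. destruct (min_ex _ H) as [k [Hk Hm]].
    exists k; split.
    + intros n Hn; apply NNPP; apply Hm; auto.
    + intros n Hn; apply (sL_bot le mul bot X Hlub Hpo Hbot HX k); auto.
Qed.

Lemma sL_ub {A : Type} (le : A -> A -> Prop) (bot : A) (X : (nat -> A) -> Prop) Hlub x :
  X x -> DD le x (sL le bot X Hlub).
Proof.
  intros Hx. destruct (classic (forall n, x n = sL le bot X Hlub n)) as [E|E].
  - left; auto.
  - right. destruct (first_diff _ _ E) as [j [Hj Hn]]. exists j; split; auto. split; auto.
    apply (proj1 (sL_spec le bot X Hlub j)). exists x; auto.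
Qed.

Lemma sL_least {A : Type} (le : A -> A -> Prop) (bot : A) (X : (nat -> A) -> Prop) Hlub
  (Hpo : partial_order le) b :
  (forall x, X x -> DD le x b) -> DD le (sL le bot X Hlub) b.
Proof.
  intros Hb. destruct (classic (forall n, sL le bot X Hlub n = b n)) as [E|E].
  - left; auto.
  - right. destruct (first_diff _ _ E) as [j [Hj Hn]]. exists j; split; auto. split; auto.
    apply (proj2 (sL_spec le bot X Hlub j)). intros y [x [[Hx Ha] Ey]]. subst y.
    destruct (Hb x Hx) as [E'|[j' [Hj' [Hl' Hn']]]].
    + rewrite E'; apply Hpo.
    + destruct (lt_eq_lt_dec j' j) as [[H|H]|H].
      * exfalso; apply Hn'. rewrite (Ha j' H). apply Hj; auto.
      * subst; auto.
      * rewrite (Hj' j H); apply Hpo.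
Qed.

Lemma dist_least {A : Type} (le : A -> A -> Prop) (mul : A -> A -> A) (Hpo : partial_order le)
  (a s b : nat -> A) (X : (nat -> A) -> Prop) :
  (forall m, is_lub le (fun z => exists y, (exists x, (X x /\ agree m x s) /\ y = x m) /\ z = mul (a m) y)
                       (mul (a m) (s m))) ->
  (forall x, X x -> DD le (fun n => mul (a n) (x n)) b) -> DD le (fun n => mul (a n) (s n)) b.
Proof.
  intros HD Hb. destruct (classic (forall n, mul (a n) (s n) = b n)) as [E|E].
  - left; auto.
  - right. destruct (first_diff (fun n => mul (a n) (s n)) b E) as [j [Hj Hn]].
    exists j; split; auto. split; auto.
    apply (proj2 (HD j)). intros z [y [[x [[Hx Hag] Ey]] Ez]]. subst z y.
    destruct (Hb x Hx) as [E'|[j' [Hj' [Hl' Hn']]]].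
    + rewrite <- (E' j); apply Hpo.
    + destruct (lt_eq_lt_dec j' j) as [[H|H]|H].
      * exfalso; apply Hn'. cbv beta. rewrite (Hag j' H). exact (Hj j' H).
      * subst; exact Hl'.
      * rewrite <- (Hj' j H); apply Hpo.
Qed.

Definition Xr {A : Type} {mul : A -> A -> A} {bot : A} (X : LexT mul bot -> Prop) (r : nat -> A) : Prop :=
  exists t, X t /\ proj1_sig t = r.

Lemma sig_eq {A : Type} (mul : A -> A -> A) (bot : A) (x y : LexT mul bot) :
  (forall n, proj1_sig x n = proj1_sig y n) -> x = y.
Proof.
  destruct x as [x Hx], y as [y Hy]; simpl; intros H.
  assert (x = y) by (extensionality n; auto). subst. f_equal. apply proof_irrelevance.
Qed.

Lemma po_T {A : Type} (le : A -> A -> Prop) (mul : A -> A -> A) (bot : A) (Hpo : partial_order le) :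
  partial_order (lex_le le (mul := mul) (bot := bot)).
Proof.
  unfold lex_le. split; [|split].
  - intros a; apply LD; auto; left; auto.
  - intros a b H1 H2; apply sig_eq; apply (D_antisym le Hpo); apply LD; auto.
  - intros a b c H1 H2; apply LD; auto. apply (D_trans le Hpo _ (proj1_sig b)); apply LD; auto.
Qed.

Lemma cm_T {A : Type} (mul : A -> A -> A) (one bot : A) (Hm : comm_monoid mul one) Hc :
  comm_monoid (lex_mul (bot := bot) Hc) (lex_one bot Hm).
Proof.
  pose proof Hm as [H1 [H2 H3]].
  split; [|split]; intros; apply sig_eq; intros n; simpl; auto.
Qed.

Lemma lub_T {A : Type} (le : A -> A -> Prop) (mul : A -> A -> A) (bot : A)
  (Hpo : partial_order le) (Hbot : forall a, le bot a) (X : LexT mul bot -> Prop)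
  (Hlub : forall (P : (nat -> A) -> Prop) n, (forall x, P x -> Xr X x) ->
     exists v, is_lub le (fun y => exists x, P x /\ y = x n) v) :
  exists s, is_lub (lex_le le (mul := mul) (bot := bot)) X s /\
    (forall n, proj1_sig s n = sL le bot (Xr X) Hlub n).
Proof.
  assert (HX : forall x, Xr X x -> in_Lex mul bot x).
  { intros x [t [_ <-]]. apply proj2_sig. }
  exists (exist _ (sL le bot (Xr X) Hlub) (sL_in le mul bot (Xr X) Hlub Hpo Hbot HX)).
  split; [split|]; unfold lex_le; simpl.
  - intros y Hy. apply LD; auto. apply sL_ub. exists y; auto.
  - intros z Hz. apply (proj2 (LD le Hpo _ _)). apply sL_least; [exact Hpo|].
    intros x [t [Ht <-]]. apply LD; auto.
  - reflexivity.
Qed.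

Lemma lub_T_spec {A : Type} (le : A -> A -> Prop) (mul : A -> A -> A) (bot : A)
  (Hpo : partial_order le) (Hbot : forall a, le bot a) (X : LexT mul bot -> Prop)
  (Hlub : forall (P : (nat -> A) -> Prop) n, (forall x, P x -> Xr X x) ->
     exists v, is_lub le (fun y => exists x, P x /\ y = x n) v) s :
  is_lub (lex_le le (mul := mul) (bot := bot)) X s ->
  (forall m, is_lub le (fun y => exists x, (Xr X x /\ agree m x (proj1_sig s)) /\ y = x m) (proj1_sig s m)) /\
  (forall x, Xr X x -> DD le x (proj1_sig s)).
Proof.
  intros Hs. destruct (lub_T le mul bot Hpo Hbot X Hlub) as [t [Ht Et]].
  assert (E : forall n, proj1_sig s n = sL le bot (Xr X) Hlub n).
  { intros n. rewrite <- Et. apply (D_antisym le Hpo); apply LD; auto.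
    - apply Hs. apply Ht.
    - apply Ht. apply Hs. }
  split.
  - intros m. rewrite E. eapply is_lub_ext; [|apply (sL_spec le bot (Xr X) Hlub m)].
    intros y; split; intros [x [[Hx Ha] Ey]]; exists x; repeat split; auto; intros i Hi.
    + rewrite (Ha i Hi); auto.
    + rewrite (Ha i Hi); auto.
  - intros x [t' [Ht' <-]]. apply LD; auto. apply Hs; auto.
Qed.

Lemma distr_T {A : Type} (le : A -> A -> Prop) (mul : A -> A -> A) (one bot : A)
  (Hpo : partial_order le) (Hbot : forall a, le bot a) (Hcm : comm_monoid mul one)
  (Habs : forall z, mul z bot = bot)
  (Hmono : forall c x y, le x y -> le (mul c x) (mul c y))
  (Hc : lex_mul_closed mul bot) (a : LexT mul bot) (X : LexT mul bot -> Prop) (s : LexT mul bot)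
  (Hlub : forall (P : (nat -> A) -> Prop) n, (forall x, P x -> Xr X x) ->
     exists v, is_lub le (fun y => exists x, P x /\ y = x n) v)
  (HDgen : forall m (Y : A -> Prop) v, is_lub le Y v -> (forall y, Y y -> exists x, Xr X x /\ y = x m) ->
       is_lub le (fun z => exists y, Y y /\ z = mul (proj1_sig a m) y) (mul (proj1_sig a m) v)) :
  is_lub (lex_le le (mul := mul) (bot := bot)) X s ->
  is_lub (lex_le le (mul := mul) (bot := bot)) (fun y => exists x, X x /\ y = lex_mul Hc a x) (lex_mul Hc a s).
Proof.
  intros Hs. destruct (lub_T_spec le mul bot Hpo Hbot X Hlub s Hs) as [S1 S2].
  split; unfold lex_le.
  - intros y [x [Hx ->]]. apply LD; auto. simpl.
    apply (D_mul le mul one bot Hpo Hcm Habs Hmono); [apply proj2_sig|].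
    apply S2. exists x; auto.
  - intros z Hz. apply LD; auto. simpl.
    apply (dist_least le mul Hpo _ _ _ (Xr X)).
    + intros m. apply HDgen; [apply S1|].
      intros y [x [[Hx _] Ey]]. exists x; auto.
    + intros x [t [Ht <-]]. apply LD; auto. apply (Hz (lex_mul Hc a t)). exists t; auto.
Qed.

Lemma sub_list {B : Type} (L : list B) : forall (Y : B -> Prop), (forall y, Y y -> In y L) ->
  exists l', forall y, Y y <-> In y l'.
Proof.
  induction L as [|a L IH]; intros Y HY.
  - exists []; intros y; split; [intros H; apply (HY y H)|intros []].
  - destruct (IH (fun y => Y y /\ y <> a)) as [l' Hl'].
    { intros y [Hy Hne]. destruct (HY y Hy) as [E|E]; [congruence|exact E]. }
    destruct (classic (Y a)) as [Ha|Ha].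
    + exists (a :: l'); intros y; split.
      * intros Hy. destruct (classic (y = a)) as [->|Hne]; [left; auto|right; apply Hl'; auto].
      * intros [<-|Hy]; auto. apply Hl' in Hy; apply Hy.
    + exists l'; intros y; split.
      * intros Hy. apply Hl'. split; auto. intros ->; auto.
      * intros Hy; apply Hl' in Hy; apply Hy.
Qed.

Lemma derive_facts {A : Type} (le : A -> A -> Prop) (mul : A -> A -> A) (bot : A)
  (Hpo : partial_order le) (Hbot : is_lub le (fun _ => False) bot) (Hfd : fin_distributive le mul) :
  (forall a, le bot a) /\ (forall z, mul z bot = bot) /\ (forall c x y, le x y -> le (mul c x) (mul c y)).
Proof.
  assert (Hb : forall a, le bot a) by (intros a; apply (proj2 Hbot); intros y []).
  split; [exact Hb|split].
  - intros z. pose proof (Hfd z [] bot Hbot) as H. apply Hpo.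
    + apply (proj2 H). intros y [x [[] _]].
    + apply Hb.
  - intros c x y Hxy.
    assert (H2 : is_lub le (fun w => In w [x; y]) y).
    { split. intros w [<-|[<-|[]]]; auto; apply Hpo. intros z Hz; apply Hz; simpl; auto. }
    apply (proj1 (Hfd c [x; y] y H2)). exists x; simpl; auto.
Qed.

Theorem proposition6 (A : Type) (le : A -> A -> Prop) (mul : A -> A -> A) (one bot : A)
  (Hbot : is_lub le (fun _ => False) bot) :
  (forall (HS : SLM le mul one), fin_distributive le mul ->
     exists Hc : lex_mul_closed mul bot,
       SLM (lex_le le (bot := bot) (mul := mul)) (lex_mul Hc) (lex_one bot (proj1 (proj2 HS))) /\
       fin_distributive (lex_le le (bot := bot) (mul := mul)) (lex_mul Hc)) /\
  (forall (HC : CLM le mul one), distributive le mul ->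
     exists Hc : lex_mul_closed mul bot,
       CLM (lex_le le (bot := bot) (mul := mul)) (lex_mul Hc) (lex_one bot (proj1 (proj2 HC))) /\
       distributive (lex_le le (bot := bot) (mul := mul)) (lex_mul Hc)).
Proof.
  split.
  - intros HS Hfd. pose proof HS as [Hpo [Hcm Hl]].
    destruct (derive_facts le mul bot Hpo Hbot Hfd) as [Hb [Habs Hmono]].
    pose (Hc := mul_closed mul one bot Hcm Habs). exists Hc.
    assert (Hlub : forall (l : list (LexT mul bot)) (P : (nat -> A) -> Prop) n,
               (forall x, P x -> Xr (fun t => In t l) x) ->
               exists v, is_lub le (fun y => exists x, P x /\ y = x n) v).
    { intros l P n HP.
      destruct (sub_list (map (fun t => proj1_sig t n) l) (fun y => exists x, P x /\ y = x n)) as [l' Hl'].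
      { intros y [x [Hx ->]]. destruct (HP x Hx) as [t [Ht <-]].
        apply (in_map (fun t => proj1_sig t n)); auto. }
      destruct (Hl l') as [v Hv]. exists v. eapply is_lub_ext; [|exact Hv].
      intros y; rewrite Hl'; tauto. }
    split; [split; [|split]|].
    + apply po_T; auto.
    + apply cm_T.
    + intros l. destruct (lub_T le mul bot Hpo Hb (fun t => In t l) (Hlub l)) as [s [Hs _]].
      exists s; exact Hs.
    + intros a l s Hs.
      apply (distr_T le mul one bot Hpo Hb Hcm Habs Hmono Hc a (fun t => In t l) s (Hlub l)); auto.
      intros m Y v Hv HY.
      destruct (sub_list (map (fun t => proj1_sig t m) l) Y) as [l' Hl'].
      { intros y Hy. destruct (HY y Hy) as [x [[t [Ht <-]] ->]].
        apply (in_map (fun t => proj1_sig t m)); auto. }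
      assert (Hv' : is_lub le (fun y => In y l') v).
      { eapply is_lub_ext; [|exact Hv]. intros y; apply Hl'. }
      eapply is_lub_ext; [|exact (Hfd (proj1_sig a m) l' v Hv')].
      intros z; split; intros [y [Hy Ez]]; exists y; split; auto; apply Hl'; auto.
  - intros HC Hd. pose proof HC as [Hpo [Hcm Hl]].
    assert (Hfd : fin_distributive le mul).
    { intros a l s Hs. apply (Hd a (fun y => In y l) s Hs). }
    destruct (derive_facts le mul bot Hpo Hbot Hfd) as [Hb [Habs Hmono]].
    pose (Hc := mul_closed mul one bot Hcm Habs). exists Hc.
    assert (Hlub : forall (X : LexT mul bot -> Prop) (P : (nat -> A) -> Prop) n,
               (forall x, P x -> Xr X x) ->
               exists v, is_lub le (fun y => exists x, P x /\ y = x n) v).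
    { intros X P n _. apply Hl. }
    split; [split; [|split]|].
    + apply po_T; auto.
    + apply cm_T.
    + intros X. destruct (lub_T le mul bot Hpo Hb X (Hlub X)) as [s [Hs _]].
      exists s; exact Hs.
    + intros a X s Hs.
      apply (distr_T le mul one bot Hpo Hb Hcm Habs Hmono Hc a X s (Hlub X)); auto.
Qed.
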